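(* Let $W_{\tilde{\boldsymbol{\delta}}}\equiv\mathbb{E}[Y_T(\tilde{\boldsymbol{\delta}}(\cdot))]$ for $\tilde{\boldsymbol{\delta}}(\cdot)\in\mathcal{D}_{stoch}$ and $W_{\boldsymbol{\delta}}\equiv E[Y_T(\boldsymbol{\delta}(\cdot))]$ for $\boldsymbol{\delta}(\cdot)\in\mathcal{D}$. Then $$\boldsymbol{\delta}^*(\cdot)\equiv\arg\max_{\boldsymbol{\delta}(\cdot)\in\mathcal{D}}W_{\boldsymbol{\delta}}=\arg\max_{\tilde{\boldsymbol{\delta}}(\cdot)\in\mathcal{D}_{stoch}}W_{\tilde{\boldsymbol{\delta}}}.$$
   Context: Fix $T\ge1$; $\boldsymbol{w}^t=(w_1,\dots,w_t)$. Binary potential outcomes $Y_t(\boldsymbol{d}^t)\in\{0,1\}$ are defined for each treatment history $\boldsymbol{d}^t\in\{0,1\}^t$, $t=1,\dots,T$. A deterministic dynamic regime is $\boldsymbol{\delta}(\cdot)=(\delta_1,\delta_2(\cdot),\dots,\delta_T(\cdot))$ with $\delta_t:\{0,1\}^{t-1}\times\{0,1\}^{t-1}\to\{0,1\}$; $\mathcal{D}$ is the set of all such regimes. The counterfactual outcome is $Y_T(\boldsymbol{\delta}(\cdot))=Y_T(\boldsymbol{d})$ where $d_1=\delta_1$ and $d_t=\delta_t(\boldsymbol{Y}^{t-1}(\boldsymbol{d}^{t-1}),\boldsymbol{d}^{t-1})$ for $t\ge2$. A stochastic dynamic regime is $\tilde{\boldsymbol{\delta}}(\cdot)=(\tilde\delta_1,\dots,\tilde\delta_T(\cdot))$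 whose rules take values in $[0,1]$ (probability of treatment) given the past outcomes and treatments; $\mathcal{D}_{stoch}$ is the set of all such regimes, so $\mathcal{D}\subset\mathcal{D}_{stoch}$. $Y_T(\tilde{\boldsymbol{\delta}}(\cdot))$ is the counterfactual outcome $Y_T(\boldsymbol{\delta}(\cdot))$ where, for every $t\le T$, the deterministic rule value $\delta_t(\cdot)=1$ is randomly assigned with probability $\tilde\delta_t(\cdot)$ and $\delta_t(\cdot)=0$ otherwise; $\mathbb{E}$ denotes expectation over the counterfactual outcomes and this randomization. *)

(* Defs.v *)
From HB Require Import structures.
From mathcomp Require Import all_boot all_order all_algebra.
Set Implicit Arguments. Unset Strict Implicit. Unset Printing Implicit Defensive.
Import Order.TTheory GRing.Theory Num.Theory.
Local Open Scope ring_scope.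

(* Periods are indexed by i : 'I_T, period i stands for t = i+1.
   A history of length i (for period i+1) is an i.-tuple bool. *)

(* Deterministic dynamic regime: delta_{i+1} : {0,1}^i (past outcomes)
   x {0,1}^i (past treatments) -> {0,1}.  D is this finite type. *)
Definition regime (T : nat) :=
  {dffun forall i : 'I_T, {ffun i.-tuple bool * i.-tuple bool -> bool}}.

(* Stochastic dynamic regime: rules with values (probability of treatment). *)
Definition stoch_regime (R : realFieldType) (T : nat) :=
  forall i : 'I_T, i.-tuple bool * i.-tuple bool -> R.

Definition is_stoch (R : realFieldType) (T : nat) (sd : stoch_regime R T) :=
  forall i h, 0 <= sd i h <= 1.

Definition embed (R : realFieldType) (T : nat) (d : regime T) : stoch_regime R T :=
  fun i h => (d i h)%:R.

Definition tup (k : nat) (s : seq bool) : k.-tuple bool :=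
  insubd (nseq_tuple k false) s.

(* Potential outcomes: for each state w of the (finite) sample space,
   Y w i dh = Y_{i+1}(d^{i+1}) with dh : (i+1).-tuple bool. *)
Section Path.
Variables (T : nat) (Omega : finType)
  (Y : Omega -> forall i : 'I_T, i.+1.-tuple bool -> bool).

(* (treatments d^n, outcomes Y^n(d^n)) generated by regime d after n steps *)
Fixpoint path (w : Omega) (d : regime T) (n : nat) : seq bool * seq bool :=
  match n with
  | 0 => ([::], [::])
  | n'.+1 =>
    let: (ds, ys) := path w d n' in
    let dn := match (insub n' : option 'I_T) with
              | Some i => d i (@tup i ys, @tup i ds)
              | None => false end in
    let ds' := rcons ds dn in
    let yn := match (insub n' : option 'I_T) with
              | Some i => @Y w i (@tup (i.+1) ds')
              | None => false end in
    (ds', rcons ys yn)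
  end.

Definition YT (w : Omega) (d : regime T) : bool := last false (path w d T).2.

End Path.

(* W_delta = E[Y_T(delta(.))], with p the probability mass function of the
   joint distribution of potential outcomes. *)
Definition W (R : realFieldType) (T : nat) (Omega : finType) (p : Omega -> R)
  (Y : Omega -> forall i : 'I_T, i.+1.-tuple bool -> bool) (d : regime T) : R :=
  \sum_(w : Omega) p w * (YT Y w d)%:R.

(* probability that the independent randomization of every rule value
   delta_t(h) := 1 w.p. sd_t(h) produces the deterministic regime d *)
Definition rand_weight (R : realFieldType) (T : nat) (sd : stoch_regime R T)
  (d : regime T) : R :=
  \prod_(i : 'I_T) \prod_(h : i.-tuple bool * i.-tuple bool)
     (if d i h then sd i h else 1 - sd i h).

(* W_{sd} = E[Y_T(sd(.))]: expectation over potential outcomes and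
   the randomization (independent of the potential outcomes). *)
Definition Wstoch (R : realFieldType) (T : nat) (Omega : finType) (p : Omega -> R)
  (Y : Omega -> forall i : 'I_T, i.+1.-tuple bool -> bool)
  (sd : stoch_regime R T) : R :=
  \sum_(d : regime T) rand_weight sd d * W p Y d.

(* Main.v *)
Require Import Defs.
From HB Require Import structures.
From mathcomp Require Import all_boot all_order all_algebra.
Import Order.TTheory GRing.Theory Num.Theory.
Local Open Scope ring_scope.

Section Aux.
Variables (R : realFieldType) (T : nat).
Definition KT := {i : 'I_T & (i.-tuple bool * i.-tuple bool)%type}.

Definition phi (d : regime T) : {ffun KT -> bool} :=
  [ffun x => d (tag x) (tagged x)].
Definition psi (f : {ffun KT -> bool}) : regime T :=
  [ffun i => [ffun h => f (Tagged (fun i : 'I_T => (i.-tuple bool * i.-tuple bool)%type) h)]].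

Lemma phiK : cancel phi psi.
Proof.
move=> d; apply/ffunP => i; apply/ffunP => h; by rewrite !ffunE.
Qed.
Lemma psiK : cancel psi phi.
Proof.
move=> f; apply/ffunP => -[i h]; by rewrite !ffunE.
Qed.

Lemma rw_flat (sd : stoch_regime R T) d :
  rand_weight sd d = \prod_(x : KT) (if phi d x then sd (tag x) (tagged x)
                                       else 1 - sd (tag x) (tagged x)).
Proof.
rewrite /rand_weight.
rewrite (@sig_big_dep _ _ _ _ (fun i : 'I_T => (i.-tuple bool * i.-tuple bool)%type) xpredT (fun i => xpredT)
   (fun i h => if d i h then sd i h else 1 - sd i h)) /=.
by apply: eq_bigr => x _; rewrite ffunE.
Qed.

Lemma sum_rw (sd : stoch_regime R T) : \sum_(d : regime T) rand_weight sd d = 1.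
Proof.
rewrite (reindex psi); last by exists phi => x _; [exact: psiK | exact: phiK].
under eq_bigr => f _ do rewrite rw_flat psiK.
rewrite -(bigA_distr_bigA (fun x (b : bool) => if b then sd (tag x) (tagged x)
                                       else 1 - sd (tag x) (tagged x))).
apply: big1 => x _.
by rewrite big_bool /= addrC subrK.
Qed.

Lemma rw_ge0 (sd : stoch_regime R T) d : is_stoch sd -> 0 <= rand_weight sd d.
Proof.
move=> hs; apply: prodr_ge0 => i _; apply: prodr_ge0 => h _.
have /andP[h0 h1] := hs i h.
by case: (d i h) => //; rewrite subr_ge0.
Qed.
End Aux.

Theorem theorem3 (R : realFieldType) (T : nat) (hT : (0 < T)%N)
  (Omega : finType) (p : Omega -> R)
  (p_ge0 : forall w, 0 <= p w) (p_sum1 : \sum_(w : Omega) p w = 1)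
  (Y : Omega -> forall i : 'I_T, i.+1.-tuple bool -> bool)
  (dstar : regime T) :
  (forall d : regime T, W p Y d <= W p Y dstar) ->
  is_stoch (embed R dstar) /\
  (forall sd : stoch_regime R T, is_stoch sd ->
     Wstoch p Y sd <= Wstoch p Y (embed R dstar)) /\
  Wstoch p Y (embed R dstar) = W p Y dstar.
Proof.
move=> Hmax.
have hst : is_stoch (embed R dstar).
  move=> i h; rewrite /embed; case: (dstar i h); apply/andP; split; rewrite /= ?ler01 ?lexx //.
have Heq : Wstoch p Y (embed R dstar) = W p Y dstar.
  rewrite /Wstoch (bigD1 dstar) //=.
  have -> : rand_weight (embed R dstar) dstar = 1.
    apply: big1 => i _; apply: big1 => h _; rewrite /embed.
    by case: (dstar i h); rewrite /= ?subr0.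
  rewrite mul1r big1 ?addr0 // => d hd.
  have [i hi] : exists i, d i != dstar i.
    apply/existsP; move: hd; apply: contraR => /existsPn hn.
    by apply/eqP/ffunP => i; apply/eqP; move: (hn i); rewrite negbK.
  have [h hh] : exists h, d i h != dstar i h.
    apply/existsP; move: hi; apply: contraR => /existsPn hn.
    by apply/eqP/ffunP => h; apply/eqP; move: (hn h); rewrite negbK.
  rewrite /rand_weight (bigD1 i) //= (bigD1 h) //= /embed.
  by move: hh; case: (d i h); case: (dstar i h) => //= _; rewrite ?subrr !mul0r.
split => //; split => //.
move=> sd hs; rewrite Heq /Wstoch.
apply: (@le_trans _ _ (\sum_(d : regime T) rand_weight sd d * W p Y dstar)).
  by apply: ler_sum => d _; apply: ler_wpM2l; [exact: rw_ge0 | exact: Hmax].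
by rewrite -mulr_suml sum_rw mul1r.
Qed.
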